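(* Consider Variant 1 of the generalized one-way trading problem under Assumption A, with $0<L<U$. Let $\alpha>1$ be the solution of $\alpha=\ln\frac{U-L}{\alpha L-L}$ and define $\phi^*(w)=L+(U-L)e^{\frac{\alpha}{C}w-\alpha}$ for $w\in[0,C]$ and $\phi^*(w)=+\infty$ for $w>C$. Then the competitive ratio of $\mathsf{OTA}_{\phi^*}$ for Variant 1 is $\alpha$.
   Context: Variant 1: a single knapsack of capacity $C$; items $n=1,\dots,N$ arrive one at a time; item $n$ has size $D_n>0$ and value function $g_n:[0,D_n]\to\mathbb R_{\ge0}$, revealed on arrival. Any remaining capacity at the end is filled at the lowest marginal value $L$: the offline problem is $\max\sum_n g_n(y_n)+(C-\sum_n y_n)L$ s.t. $\sum_n y_n\le C$, $0\le y_n\le D_n$, and an online algorithm choosing $y_1,\dots,y_N$ earns $\sum_n g_n(y_n)+(C-\sum_n y_n)L$. Assumption A: each $g_n$ is non-decreasing, differentiable, concave, $g_n(0)=0$, $L\le g_n'\le U$, with $C,L,U$ known. An online algorithm irrevocably chooses $y_n$ on arrival using only items $1,\dots,n$ and $C,L,U$; competitive ratio is $\sup_{\mathcal I}\mathrm{OPT}/\mathrm{ALG}$ over instances satisfying Assumption A. $\mathsf{OTA}_\phi$: start with $w^{(1)}=0$; upon arrival of item $n$ choose $y_n^*\in\arg\max_{0\le y\le D_n} g_n(y)-\int_{w^{(n)}}^{w^{(n)}+y}\phi(u)du$ and set $w^{(n+1)}=w^{(n)}+y_n^*$. *)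

(* Defs.v *)
From Stdlib Require Import Reals Lra.
From Coquelicot Require Import Coquelicot.
Open Scope R_scope.

Fixpoint psum (f : nat -> R) (n : nat) : R :=
  match n with
  | O => 0
  | S k => psum f k + f k
  end.

(* Assumption A for a single value function g on [0, D]:
   non-decreasing, differentiable, concave, g(0)=0, L <= g' <= U.
   g is given as a function R -> R; only its behaviour on [0,D] matters. *)
Definition assumptionA_fun (L U D : R) (g : R -> R) : Prop :=
  g 0 = 0 /\
  (forall x y, 0 <= x -> x <= y -> y <= D -> g x <= g y) /\
  (forall x y t, 0 <= x <= D -> 0 <= y <= D -> 0 <= t <= 1 ->
     t * g x + (1 - t) * g y <= g (t * x + (1 - t) * y)) /\
  (forall x, 0 <= x <= D -> ex_derive g x /\ L <= Derive g x <= U).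

Definition valid_instance (L U : R) (N : nat) (D : nat -> R) (g : nat -> R -> R)
  : Prop :=
  forall n, (n < N)%nat -> 0 < D n /\ assumptionA_fun L U (D n) (g n).

(* Objective value of a decision vector y (items 0..N-1): filled leftover
   capacity is valued at L. *)
Definition payoff (C L : R) (N : nat) (g : nat -> R -> R) (y : nat -> R) : R :=
  psum (fun n => g n (y n)) N + (C - psum y N) * L.

Definition feasible (C : R) (N : nat) (D : nat -> R) (y : nat -> R) : Prop :=
  psum y N <= C /\ forall n, (n < N)%nat -> 0 <= y n <= D n.

(* The threshold function phi* on [0, C] (it is +infinity for w > C). *)
Definition phi_star (C L U alpha : R) (w : R) : R :=
  L + (U - L) * exp (alpha / C * w - alpha).

(* Since phi*(u) = +infinity for u > C, any y with w + y > C has objective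
   -infinity (while y = 0 has objective 0), so the argmax is taken over
   0 <= y <= D n with w + y <= C, where the integrand is the finite phi*. *)
Definition ota_run (C L U alpha : R) (N : nat) (D : nat -> R)
  (g : nat -> R -> R) (y : nat -> R) : Prop :=
  forall n, (n < N)%nat ->
    let w := psum y n in
    (0 <= y n <= D n /\ w + y n <= C) /\
    forall z, 0 <= z <= D n -> w + z <= C ->
      g n z - RInt (phi_star C L U alpha) w (w + z)
      <= g n (y n) - RInt (phi_star C L U alpha) w (w + y n).

(* "The competitive ratio of OTA_phi* for Variant 1 is r":
   sup over instances (satisfying Assumption A) of OPT / ALG equals r, i.e.
   (i) on every instance, every run of the algorithm and every feasible offline
       solution x:  payoff x <= r * ALG   (so OPT <= r * ALG), and
   (ii) for every beta < r there is an instance on which (the algorithm has a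
       run and) every run of the algorithm satisfies beta * ALG < OPT. *)
Definition ota_competitive_ratio_is (C L U alpha r : R) : Prop :=
  (forall N D g y x,
      valid_instance L U N D g ->
      ota_run C L U alpha N D g y ->
      feasible C N D x ->
      payoff C L N g x <= r * payoff C L N g y) /\
  (forall beta, beta < r ->
     exists N D g,
       valid_instance L U N D g /\
       (exists y, ota_run C L U alpha N D g y) /\
       forall y, ota_run C L U alpha N D g y ->
         exists x, feasible C N D x /\
           beta * payoff C L N g y < payoff C L N g x).

(* Main.v *)
Require Import Defs.
From Stdlib Require Import Reals Lra Lia.
From Coquelicot Require Import Coquelicot.
Open Scope R_scope.

Definition Fp (C L U a w : R) : R := L*w + (U-L)*(C/a)*exp(a/C*w - a).

Lemma RInt_phi C L U a x y : 0 < C -> 0 < a ->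
  RInt (phi_star C L U a) x y = Fp C L U a y - Fp C L U a x.
Proof.
  intros HC Ha.
  apply is_RInt_unique.
  apply (is_RInt_derive (Fp C L U a) (phi_star C L U a)).
  - intros t _. unfold Fp, phi_star. auto_derive; [trivial|]. unfold Rminus. field; lra.
  - intros t _. apply (ex_derive_continuous (phi_star C L U a)).
    unfold phi_star. auto_derive. trivial.
Qed.

Lemma Eshift a C x h : exp(a/C*(x+h) - a) = exp(a/C*x - a) * exp(a/C*h).
Proof. rewrite <- exp_plus. f_equal. ring. Qed.

Lemma F_diff C L U a x h :
  Fp C L U a (x+h) - Fp C L U a x = L*h + (U-L)*(C/a)*exp(a/C*x-a)*(exp(a/C*h)-1).
Proof. unfold Fp. rewrite Eshift. ring. Qed.

Lemma phi_shift C L U a x h :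
  phi_star C L U a (x+h) = L + (U-L)*exp(a/C*x-a)*exp(a/C*h).
Proof. unfold phi_star. rewrite Eshift. ring. Qed.

Lemma exp_up d : 0 <= d -> exp d - 1 <= d * exp d.
Proof.
  intros Hd. pose proof (exp_ineq1_le (-d)).
  assert (exp d * exp (-d) = 1) by (rewrite <- exp_plus; replace (d + - d) with 0 by ring; apply exp_0).
  pose proof (exp_pos d). nra.
Qed.

Lemma F_up C L U a x h : 0 < C -> 0 < a -> L < U -> 0 <= h ->
  Fp C L U a (x+h) - Fp C L U a x <= h * phi_star C L U a (x+h).
Proof.
  intros HC Ha HLU Hh. rewrite F_diff, phi_shift.
  set (E := exp (a/C*x - a)). set (d := a/C*h).
  assert (HE : 0 < E) by apply exp_pos.
  assert (Hd : 0 <= d) by (unfold d; apply Rmult_le_pos; [apply Rlt_le, Rdiv_lt_0_compat|]; lra).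
  assert (Hh2 : h = (C/a)*d) by (unfold d; field; lra).
  pose proof (exp_up d Hd).
  assert (HK : 0 < C/a) by (apply Rdiv_lt_0_compat; lra).
  rewrite Hh2.
  assert (0 < (U-L)*E) by nra.
  assert (0 <= (U-L)*E*(C/a)*(d*exp d - (exp d - 1))).
  { apply Rmult_le_pos; [nra| lra]. }
  nra.
Qed.

Lemma F_low C L U a x h : 0 < C -> 0 < a -> L < U -> 0 < h ->
  h * phi_star C L U a x < Fp C L U a (x+h) - Fp C L U a x.
Proof.
  intros HC Ha HLU Hh. rewrite F_diff.
  replace (phi_star C L U a x) with (L + (U-L)*exp(a/C*x-a)) by (unfold phi_star; ring).
  set (E := exp (a/C*x - a)). set (d := a/C*h).
  assert (HE : 0 < E) by apply exp_pos.
  assert (Hd : 0 < d) by (unfold d; apply Rmult_lt_0_compat; [apply Rdiv_lt_0_compat|]; lra).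
  assert (Hh2 : h = (C/a)*d) by (unfold d; field; lra).
  pose proof (exp_ineq1 d ltac:(lra)).
  assert (HK : 0 < C/a) by (apply Rdiv_lt_0_compat; lra).
  rewrite Hh2.
  assert (0 < (U-L)*E) by nra.
  assert (0 < (U-L)*E*(C/a)*((exp d - 1) - d)).
  { apply Rmult_lt_0_compat; [nra| lra]. }
  nra.
Qed.

Lemma phi_mono C L U a x y : 0 < C -> 0 < a -> L < U -> x <= y ->
  phi_star C L U a x <= phi_star C L U a y.
Proof.
  intros. unfold phi_star.
  destruct (Req_dec x y). subst; lra.
  assert (exp (a/C*x - a) < exp (a/C*y-a)).
  { apply exp_increasing. assert (0 < a/C) by (apply Rdiv_lt_0_compat; lra). nra. }
  nra.
Qed.

Lemma phi_gt_L C L U a x : L < U -> L < phi_star C L U a x.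
Proof. intros. unfold phi_star. pose proof (exp_pos (a/C*x-a)). nra. Qed.

Lemma phi_C C L U a : 0 < C -> phi_star C L U a C = U.
Proof. intros. unfold phi_star. replace (a/C*C - a) with 0 by (field; lra). rewrite exp_0. ring. Qed.

Lemma lim_lemma A B m k eps : 0 < m -> 0 < k -> 0 < eps ->
  (forall t, 0 < t <= eps -> A <= B + m * exp (k*t)) -> A <= B + m.
Proof.
  intros Hm Hk He H.
  destruct (Rle_or_lt A (B+m)) as [|Hlt]; [assumption|exfalso].
  set (r := (A-B)/m).
  assert (Hr : 1 < r) by (unfold r; apply (Rmult_lt_reg_r m); [lra|]; field_simplify; lra).
  assert (Hlr : 0 < ln r) by (rewrite <- ln_1; apply ln_increasing; lra).
  set (t := Rmin eps (ln r / (2*k))).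
  assert (Ht0 : 0 < t) by (unfold t; apply Rmin_glb_lt; [lra|apply Rdiv_lt_0_compat; lra]).
  assert (Hte : t <= eps) by apply Rmin_l.
  assert (Htl : t <= ln r / (2*k)) by apply Rmin_r.
  assert (Hkt : k*t < ln r).
  { assert (k * t <= k * (ln r/(2*k))) by (apply Rmult_le_compat_l; lra).
    replace (k * (ln r/(2*k))) with (ln r / 2) in H0 by (field; lra). lra. }
  assert (exp (k*t) < r) by (rewrite <- (exp_ln r) by lra; apply exp_increasing; lra).
  specialize (H t (conj Ht0 Hte)).
  assert (A = B + m * r) by (unfold r; field; lra).
  nra.
Qed.

Lemma mvt_U L U D g y z : assumptionA_fun L U D g -> 0 <= y -> y < z -> z <= D ->
  g z - g y <= U * (z - y).
Proof.
  intros [_ [_ [_ Hd]]] Hy Hyz HzD.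
  destruct (MVT_gen g y z (Derive g)) as [c [Hc Heq]].
  - intros x Hx. rewrite Rmin_left in Hx by lra. rewrite Rmax_right in Hx by lra.
    apply Derive_correct. apply Hd; lra.
  - intros x Hx. rewrite Rmin_left in Hx by lra. rewrite Rmax_right in Hx by lra.
    apply derivable_continuous_pt. apply ex_derive_Reals_0. apply Hd; lra.
  - rewrite Rmin_left in Hc by lra. rewrite Rmax_right in Hc by lra.
    rewrite Heq. destruct (Hd c ltac:(lra)) as [_ Hb]. apply Rmult_le_compat_r; lra.
Qed.

Lemma item_bound C L U a g D w y W :
  0 < C -> 0 < a -> L < U -> assumptionA_fun L U D g ->
  0 <= y <= D -> w + y <= C -> w + y <= W -> W <= C ->
  (forall z, 0 <= z <= D -> w + z <= C ->
     g z - (Fp C L U a (w+z) - Fp C L U a w) <= g y - (Fp C L U a (w+y) - Fp C L U a w)) ->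
  forall z, 0 <= z <= D ->
    g z - phi_star C L U a W * z <= g y - (Fp C L U a (w+y) - Fp C L U a w).
Proof.
  intros HC Ha HLU HA Hy HyC HyW HWC Hopt z Hz.
  destruct (Rle_or_lt z y) as [Hzy|Hzy].
  - specialize (Hopt z Hz ltac:(lra)).
    pose proof (F_up C L U a w z HC Ha HLU ltac:(lra)).
    pose proof (phi_mono C L U a (w+z) W HC Ha HLU ltac:(lra)).
    assert (z * phi_star C L U a (w + z) <= z * phi_star C L U a W)
      by (apply Rmult_le_compat_l; lra).
    lra.
  - assert (Hclaim : g z - g y <= phi_star C L U a W * (z - y)).
    { destruct (Rle_or_lt C (w+y)) as [HeqC|HltC].
      + assert (W = C) by lra. subst W. rewrite phi_C by lra.
        apply (mvt_U L U D); try assumption; lra.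
      + assert (Hq : g z - g y <= (z-y) * phi_star C L U a (w+y)).
        { set (Q := (g z - g y)/(z-y)).
          assert (HQ : g z - g y = (z-y)*Q) by (unfold Q; field; lra).
          rewrite HQ. apply Rmult_le_compat_l; [lra|].
          replace (phi_star C L U a (w+y)) with (L + (U-L)*exp(a/C*(w+y)-a)*1)
            by (unfold phi_star; ring).
          rewrite <- exp_0.
          replace 0 with (a/C*0) by ring.
          assert (0 < a / C) by (apply Rdiv_lt_0_compat; lra).
          assert (0 < (U - L) * exp (a / C * (w + y) - a)) by (pose proof (exp_pos (a / C * (w + y) - a)); nra).
          rewrite Rmult_0_r, exp_0, Rmult_1_r.
          apply (lim_lemma Q L _ (a/C) (Rmin (z-y) (C-(w+y)))); try lra.
          { apply Rmin_glb_lt; lra. }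
          intros t [Ht0 Ht].
          assert (t <= z - y) by (eapply Rle_trans; [apply Ht| apply Rmin_l]).
          assert (t <= C - (w+y)) by (eapply Rle_trans; [apply Ht| apply Rmin_r]).
          rewrite <- phi_shift.
          pose proof (Hopt (y+t) ltac:(lra) ltac:(lra)) as Ho.
          replace (w + (y+t)) with ((w+y)+t) in Ho by ring.
          pose proof (F_up C L U a (w+y) t HC Ha HLU ltac:(lra)) as Hf.
          destruct HA as [_ [_ [Hcc _]]].
          set (s := t/(z-y)).
          assert (Hs : 0 <= s <= 1) by (unfold s; split;
            [apply Rlt_le, Rdiv_lt_0_compat; lra | apply (Rmult_le_reg_r (z-y)); [lra|]; field_simplify; lra]).
          pose proof (Hcc z y s ltac:(lra) ltac:(lra) Hs) as Hconc.
          replace (s * z + (1 - s) * y) with (y + t) in Hconc by (unfold s; field; lra).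
          assert (Hsq : s * (g z - g y) <= t * phi_star C L U a (w + y + t)) by lra.
          assert (HQs : s * (g z - g y) = t * Q) by (unfold s, Q; field; lra).
          rewrite HQs in Hsq.
          apply (Rmult_le_reg_l t); lra. }
        pose proof (phi_mono C L U a (w+y) W HC Ha HLU HyW).
        assert ((z-y) * phi_star C L U a (w + y) <= (z-y) * phi_star C L U a W)
          by (apply Rmult_le_compat_l; lra).
        lra. }
    pose proof (F_up C L U a w y HC Ha HLU ltac:(lra)).
    pose proof (phi_mono C L U a (w+y) W HC Ha HLU HyW).
    assert (y * phi_star C L U a (w + y) <= y * phi_star C L U a W)
      by (apply Rmult_le_compat_l; lra).
    lra.
Qed.

Lemma alpha_id L U alpha : 0 < L -> L < U -> 1 < alpha ->
  alpha = ln ((U - L) / (alpha * L - L)) -> (U-L)*exp(-alpha) = alpha*L - L.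
Proof.
  intros HL HLU Ha Hal.
  assert (Hp : 0 < alpha*L - L) by nra.
  assert (E : exp alpha = (U-L)/(alpha*L-L)).
  { rewrite Hal at 1. apply exp_ln. apply Rdiv_lt_0_compat; lra. }
  rewrite exp_Ropp, E. field. lra.
Qed.

Lemma phi0 C L U alpha : 0 < C -> 0 < L -> L < U -> 1 < alpha ->
  alpha = ln ((U - L) / (alpha * L - L)) -> phi_star C L U alpha 0 = alpha * L.
Proof.
  intros. unfold phi_star. replace (alpha/C*0 - alpha) with (-alpha) by (field; lra).
  rewrite (alpha_id L U alpha) by assumption. ring.
Qed.

Theorem corollary1 (C L U alpha : R) :
  0 < C -> 0 < L -> L < U ->
  1 < alpha -> alpha = ln ((U - L) / (alpha * L - L)) ->
  ota_competitive_ratio_is C L U alpha alpha.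
Proof.
  intros HC HL HLU Ha Hal.
  assert (Ha0 : 0 < alpha) by lra.
  pose proof (alpha_id L U alpha HL HLU Ha Hal) as Hid.
  split.
  - intros N D g y x Hv Hrun Hfeas.
    set (F := Fp C L U alpha). set (phi := phi_star C L U alpha).
    assert (Hy0 : forall n, (n < N)%nat -> 0 <= y n).
    { intros n Hn. destruct (Hrun n Hn) as [[H1 _] _]. lra. }
    assert (Hmono : forall k m, (m + k <= N)%nat -> psum y m <= psum y (m + k)).
    { induction k; intros m Hm.
      - rewrite Nat.add_0_r. lra.
      - replace (m + S k)%nat with (S (m + k)) by lia. simpl.
        pose proof (IHk m ltac:(lia)). pose proof (Hy0 (m+k)%nat ltac:(lia)). lra. }
    assert (Hmono' : forall m, (m <= N)%nat -> psum y m <= psum y N).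
    { intros m Hm. replace N with (m + (N - m))%nat by lia. apply Hmono. lia. }
    set (W := psum y N).
    assert (HWC : W <= C).
    { unfold W. destruct N as [|n].
      - simpl. lra.
      - destruct (Hrun n ltac:(lia)) as [[_ H2] _]. simpl. exact H2. }
    set (lam := phi W).
    assert (Hsum : forall m, (m <= N)%nat ->
      psum (fun n => g n (x n)) m - lam * psum x m
        <= psum (fun n => g n (y n)) m - (F (psum y m) - F 0)).
    { induction m; intros Hm.
      - simpl. lra.
      - simpl. pose proof (IHm ltac:(lia)) as IH.
        destruct (Hrun m ltac:(lia)) as [[H1 H2] H3].
        destruct (Hv m ltac:(lia)) as [_ HA].
        pose proof (Hmono' (S m) Hm) as HSm. simpl in HSm.
        assert (Hopt : forall z, 0 <= z <= D m -> psum y m + z <= C ->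
          g m z - (F (psum y m + z) - F (psum y m))
            <= g m (y m) - (F (psum y m + y m) - F (psum y m))).
        { intros z Hz Hz2. pose proof (H3 z Hz Hz2) as Hq.
          rewrite !RInt_phi in Hq by lra. exact Hq. }
        destruct Hfeas as [_ Hx].
        pose proof (item_bound C L U alpha (g m) (D m) (psum y m) (y m) W HC Ha0 HLU HA
          H1 H2 HSm HWC Hopt (x m) (Hx m ltac:(lia))) as Hb.
        fold F phi in Hb. fold lam in Hb.
        lra. }
    assert (HGI : forall m, (m <= N)%nat ->
      F (psum y m) - F 0 <= psum (fun n => g n (y n)) m).
    { induction m; intros Hm.
      - simpl. lra.
      - simpl. pose proof (IHm ltac:(lia)) as IH.
        destruct (Hrun m ltac:(lia)) as [[H1 H2] H3].
        destruct (Hv m ltac:(lia)) as [_ [Hg0 _]].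
        pose proof (H3 0 ltac:(lra) ltac:(lra)) as Hq.
        rewrite !RInt_phi in Hq by lra. rewrite Rplus_0_r, Hg0 in Hq.
        fold F in Hq. lra. }
    pose proof (Hsum N (le_n N)) as HS. pose proof (HGI N (le_n N)) as HG.
    fold W in HS, HG.
    assert (Hlam : lam * C = alpha * (F W - F 0) + alpha * (C - W) * L).
    { unfold lam, phi, F, phi_star, Fp.
      replace (alpha/C*0 - alpha) with (-alpha) by (field; lra).
      assert (exp (- alpha) = (alpha*L - L)/(U-L)) by (rewrite <- Hid; field; lra).
      rewrite H. field. lra. }
    assert (HlamL : L <= lam) by (unfold lam, phi; pose proof (phi_gt_L C L U alpha W HLU); lra).
    destruct Hfeas as [Hxs _].
    unfold payoff. fold W.
    set (Gx := psum (fun n => g n (x n)) N) in *.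
    set (Gy := psum (fun n => g n (y n)) N) in *.
    set (Sx := psum x N) in *.
    assert (0 <= (C - Sx) * (lam - L)) by (apply Rmult_le_pos; lra).
    assert (0 <= (alpha - 1) * (Gy - (F W - F 0))) by (apply Rmult_le_pos; lra).
    nra.
  - intros beta Hb.
    assert (HaL : alpha * L <= U).
    { assert (exp (-alpha) < 1) by (rewrite <- exp_0; apply exp_increasing; lra). nra. }
    assert (Hphi0 := phi0 C L U alpha HC HL HLU Ha Hal).
    assert (Hvalid : valid_instance L U 1 (fun _ => C) (fun _ t => alpha * L * t)).
    { intros n Hn. split; [lra|]. split; [ring|]. split.
      - intros. apply Rmult_le_compat_l; nra.
      - split.
        + intros. nra.
        + intros t Ht. split.
          * auto_derive. trivial.
          * replace (Derive (fun t0 => alpha * L * t0) t) with (alpha * L).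
            -- nra.
            -- symmetry. apply is_derive_unique. auto_derive; [trivial| ring]. }
    exists 1%nat, (fun _ => C), (fun _ t => alpha * L * t).
    split; [exact Hvalid|]. split.
    + exists (fun _ => 0). intros n Hn. destruct n; [|lia]. simpl. split; [repeat split; try lra; simpl; try lra|].
      intros z Hz Hz2. rewrite !RInt_phi by lra.
      rewrite ?Rplus_0_l, ?Rplus_0_r.
      destruct (Req_dec z 0) as [->|Hz0].
      * lra.
      * pose proof (F_low C L U alpha 0 z HC Ha0 HLU ltac:(lra)) as H.
        rewrite Hphi0, Rplus_0_l in H. lra.
    + intros y Hrun. destruct (Hrun 0%nat ltac:(lia)) as [[H1 H2] H3].
      simpl in H1, H2, H3.
      assert (Hy0 : y 0%nat = 0).
      { destruct (Req_dec (y 0%nat) 0) as [|Hne]; [assumption|exfalso].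
        pose proof (H3 0 ltac:(lra) ltac:(lra)) as Hq.
        rewrite !RInt_phi in Hq by lra.
        pose proof (F_low C L U alpha 0 (y 0%nat) HC Ha0 HLU ltac:(lra)) as Hf.
        rewrite Hphi0 in Hf. rewrite Rplus_0_l in Hf. rewrite !Rplus_0_l in Hq. lra. }
      exists (fun _ => C). split.
      * split; [simpl; lra|]. intros n Hn. lra.
      * unfold payoff. simpl. rewrite Hy0.
        assert (0 < C * L) by nra. nra.
Qed.
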